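(* Let $0<q<1$ and $n\ge1$. For every $\lambda\in U(1)$ the formulas \begin{align*} \pi_\lambda(y_i)|\mathbf{k}\rangle &=q^{k_1+\ldots+k_{i-1}}\sqrt{1-q^{2k_i}}\,|\mathbf{k}-\mathbf{e}_i\rangle \qquad (1\leq i\leq n-1),\\ \pi_\lambda(y_n)|\mathbf{k}\rangle &=q^{k_1+\ldots+k_{n-1}}\sqrt{1-q^{4k_n}}\,|\mathbf{k}-\mathbf{e}_n\rangle ,\\ \pi_\lambda(y_{n+1})|\mathbf{k}\rangle &=\lambda\, q^{|\mathbf{k}|+k_n}|\mathbf{k}\rangle , \end{align*} define an irreducible bounded $*$-representation $\pi_\lambda$ of $\mathcal{A}(\Sigma^{2n+1}_q)$ on $\ell^2(\mathbb{N}^n)$. Here $\mathbf{k}=(k_1,\ldots,k_n)\in\mathbb{N}^n$ ($\mathbb{N}=\{0,1,2,\dots\}$), $|\mathbf{k}|=k_1+\dots+k_n$, $\{|\mathbf{k}\rangle\}$ is the canonical orthonormal basis of $\ell^2(\mathbb{N}^n)$, $\mathbf{e}_i$ is the $i$-th standard basis vector of $\mathbb{Z}^n$, and $|\mathbf{k}\rangle:=0$ if some component of $\mathbf{k}$ is negative.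
   Context: Let $0<q<1$, $n\ge1$. $\mathcal{A}(S^{4n-1}_q)$ is the complex unital $*$-algebra generated by $x_1,\dots,x_n,y_1,\dots,y_n$ and their adjoints subject to: $x_ix_j=q^{-1}x_jx_i$ ($i<j$); $y_iy_j=q^{-1}y_jy_i$ ($i>j$); $x_iy_j=q^{-1}y_jx_i$ ($i\ne j$); $y_ix_i=q^2x_iy_i+(q^2-1)\sum_{k=1}^{i-1}q^{i-k}x_ky_k$; $x_ix_i^*=x_i^*x_i+(1-q^2)\sum_{k=1}^{i-1}x_k^*x_k$; $y_iy_i^*=y_i^*y_i+(1-q^2)\{q^{2(n+1-i)}x_i^*x_i+\sum_{k=1}^n x_k^*x_k+\sum_{k=i+1}^n y_k^*y_k\}$; $x_iy_i^*=q^2y_i^*x_i$; $x_ix_j^*=qx_j^*x_i$ ($i\ne j$); $y_iy_j^*=qy_j^*y_i-(q^2-1)q^{2n+2-i-j}x_i^*x_j$ ($i\neq j$); $x_iy_j^*=qy_j^*x_i$ ($i<j$); $x_iy_j^*=qy_j^*x_i+(q^2-1)q^{i-j}y_i^*x_j$ ($i>j$); and $\sum_{i=1}^n(x_i^*x_i+y_i^*y_i)=1$. $\mathcal{A}(\Sigma^{2n+1}_q)$ is the quotient of $\mathcal{A}(S^{4n-1}_q)$ by the two-sided $*$-ideal generated by $x_1,\dots,x_{n-1}$; in it, $y_1,\dots,y_n$ denote the images of $y_1,\dots,y_n$ and $y_{n+1}$ denotes the image of $x_n$. In this quotient, $y_{n+1}$ is normal and the following hold (with their adjoints): $y_iy_j=q^{-1}y_jy_i$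 and $y_i^*y_j=q^{-1}y_jy_i^*$ for $i>j$, $(i,j)\neq(n+1,n)$; $y_{n+1}y_n=q^{-2}y_ny_{n+1}$, $y_{n+1}^*y_n=q^{-2}y_ny_{n+1}^*$; $[y_i,y_i^*]=(1-q^2)\sum_{k=i+1}^{n+1}y_k^*y_k$ for $i\neq n$; $[y_n,y_n^*]=(1-q^4)y_{n+1}^*y_{n+1}$; $\sum_{i=1}^{n+1}y_i^*y_i=1$. *)

(* Defs.v *)
From HB Require Import structures.
From mathcomp Require Import all_boot all_order all_algebra.
From mathcomp Require Import all_classical all_reals all_analysis.
From mathcomp Require Import complex.
Import Order.TTheory GRing.Theory Num.Theory.
Import numFieldNormedType.Exports.
Set Implicit Arguments.
Unset Strict Implicit.
Unset Printing Implicit Defensive.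
Local Open Scope classical_set_scope.
Local Open Scope ring_scope.

(* the paper's index i (1 <= i <= n) corresponds to the ordinal i-1.        *)

Definition idx (n : nat) := {ffun 'I_n -> nat}.
Definition vec (R : realType) (n : nat) := idx n -> R[i].
Definition op (R : realType) (n : nat) := vec R n -> vec R n.

Definition sqmod (R : realType) (z : R[i]) : R := complex.Re z ^+ 2 + complex.Im z ^+ 2.

Definition sqnorm (R : realType) (n : nat) (f : vec R n) : \bar R :=
  (\esum_(k in [set: idx n]) (sqmod (f k))%:E)%E.

Definition in_l2 (R : realType) (n : nat) (f : vec R n) : Prop :=
  (sqnorm f < +oo)%E.

(* Sum of an (absolutely summable) real family over a countable set:
   sum of the positive parts minus sum of the negative parts. *)
Definition rsum (R : realType) (T : choiceType) (u : T -> R) : R :=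
  fine (\esum_(k in [set: T]) ((Num.max (u k) 0)%:E))%E
  - fine (\esum_(k in [set: T]) ((Num.max (- u k) 0)%:E))%E.

Definition cdot (R : realType) (n : nat) (f g : vec R n) : R[i] :=
  (rsum (fun k => complex.Re (conjc (f k) * g k)) +i* rsum (fun k => complex.Im (conjc (f k) * g k)))%C.

Definition bounded_op (R : realType) (n : nat) (T : op R n) : Prop :=
  exists M : R, forall f, in_l2 f ->
    in_l2 (T f) /\ fine (sqnorm (T f)) <= M * fine (sqnorm f).

Definition adjoint_of (R : realType) (n : nat) (T S : op R n) : Prop :=
  forall f g, in_l2 f -> in_l2 g -> cdot (T f) g = cdot f (S g).

Definition opeq (R : realType) (n : nat) (T S : op R n) : Prop :=
  forall f, in_l2 f -> T f = S f.

(* Defining relations of A(S^{4n-1}_q) for images X_i = pi(x_i),             *)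
(* Xs_i = pi(x_i^* ), Y_i = pi(y_i), Ys_i = pi(y_i^* ) (0-based indices).    *)

Definition sphere_rels (R : realType) (n : nat) (q : R)
    (X Xs Y Ys : 'I_n -> op R n) : Prop :=
  let c : R[i] := (q%:C)%C in
  (forall i j : 'I_n, (i < j)%N ->
     opeq (fun f => X i (X j f)) (fun f m => c^-1 * X j (X i f) m)) /\
  (forall i j : 'I_n, (j < i)%N ->
     opeq (fun f => Y i (Y j f)) (fun f m => c^-1 * Y j (Y i f) m)) /\
  (forall i j : 'I_n, i != j ->
     opeq (fun f => X i (Y j f)) (fun f m => c^-1 * Y j (X i f) m)) /\
  (forall i : 'I_n,
     opeq (fun f => Y i (X i f))
          (fun f m => c ^+ 2 * X i (Y i f) m
             + (c ^+ 2 - 1) * \sum_(k < n | (k < i)%N) c ^+ (i - k) * X k (Y k f) m)) /\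
  (forall i : 'I_n,
     opeq (fun f => X i (Xs i f))
          (fun f m => Xs i (X i f) m
             + (1 - c ^+ 2) * \sum_(k < n | (k < i)%N) Xs k (X k f) m)) /\
  (* y_i y_i^* = y_i^* y_i + (1-q^2){q^{2(n+1-i)} x_i^* x_i + sum_k x_k^* x_k
                                     + sum_{k>i} y_k^* y_k}  (1-based i) *)
  (forall i : 'I_n,
     opeq (fun f => Y i (Ys i f))
          (fun f m => Ys i (Y i f) m
             + (1 - c ^+ 2) * (c ^+ (2 * (n - i)) * Xs i (X i f) m
                               + \sum_(k < n) Xs k (X k f) m
                               + \sum_(k < n | (i < k)%N) Ys k (Y k f) m))) /\
  (forall i : 'I_n,
     opeq (fun f => X i (Ys i f)) (fun f m => c ^+ 2 * Ys i (X i f) m)) /\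
  (forall i j : 'I_n, i != j ->
     opeq (fun f => X i (Xs j f)) (fun f m => c * Xs j (X i f) m)) /\
  (* y_i y_j^* = q y_j^* y_i - (q^2-1) q^{2n+2-i-j} x_i^* x_j  (i <> j, 1-based) *)
  (forall i j : 'I_n, i != j ->
     opeq (fun f => Y i (Ys j f))
          (fun f m => c * Ys j (Y i f) m
             - (c ^+ 2 - 1) * c ^+ (2 * n - i - j) * Xs i (X j f) m)) /\
  (forall i j : 'I_n, (i < j)%N ->
     opeq (fun f => X i (Ys j f)) (fun f m => c * Ys j (X i f) m)) /\
  (forall i j : 'I_n, (j < i)%N ->
     opeq (fun f => X i (Ys j f))
          (fun f m => c * Ys j (X i f) m
             + (c ^+ 2 - 1) * c ^+ (i - j) * Ys i (X j f) m)) /\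
  opeq (fun f m => \sum_(i < n) (Xs i (X i f) m + Ys i (Y i f) m)) (fun f => f).

(* Images of x_1,...,x_n in the quotient A(Sigma^{2n+1}_q): x_1..x_{n-1}
   are sent to 0, x_n to the image Z of y_{n+1}. *)
Definition Xsig (R : realType) (n : nat) (Z : op R n) : 'I_n -> op R n :=
  fun k => if (k : nat) == n.-1 then Z else (fun _ _ => 0).

(* A bounded *-representation of A(Sigma^{2n+1}_q) on l^2(N^n), given by the
   images Y i = pi(y_{i+1}), Ys i = pi(y_{i+1}^* ), Z = pi(y_{n+1}),
   Zs = pi(y_{n+1}^* ): bounded operators, *-compatible (adjoints), and
   satisfying the defining relations of the quotient algebra. *)
Definition star_rep_Sigma (R : realType) (n : nat) (q : R)
    (Y Ys : 'I_n -> op R n) (Z Zs : op R n) : Prop :=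
  (forall i, bounded_op (Y i) /\ bounded_op (Ys i) /\ adjoint_of (Y i) (Ys i)) /\
  bounded_op Z /\ bounded_op Zs /\ adjoint_of Z Zs /\
  sphere_rels q (Xsig Z) (Xsig Zs) Y Ys.

Definition closed_subspace (R : realType) (n : nat) (V : set (vec R n)) : Prop :=
  (forall f, V f -> in_l2 f) /\
  V (fun _ => 0) /\
  (forall f g, V f -> V g -> V (fun m => f m + g m)) /\
  (forall (a : R[i]) f, V f -> V (fun m => a * f m)) /\
  (forall (u : nat -> vec R n) (f : vec R n), (forall j, V (u j)) -> in_l2 f ->
     fine (sqnorm (fun m => u j m - f m)) @[j --> \oo] --> (0 : R) -> V f).

Definition invariant (R : realType) (n : nat) (V : set (vec R n)) (T : op R n) : Prop :=
  forall f, V f -> V (T f).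

(* irreducibility: no closed subspace other than {0} and l^2 is invariant
   under the image of the algebra (equivalently, of its generators). *)
Definition irreducible_Sigma (R : realType) (n : nat)
    (Y Ys : 'I_n -> op R n) (Z Zs : op R n) : Prop :=
  forall V : set (vec R n), closed_subspace V ->
    (forall i, invariant V (Y i) /\ invariant V (Ys i)) ->
    invariant V Z -> invariant V Zs ->
    (forall f, V f -> f = (fun _ => 0)) \/ (forall f, in_l2 f -> V f).

Definition incr (n : nat) (k : idx n) (i : 'I_n) : idx n :=
  [ffun j => if j == i then (k j).+1 else k j].
Definition decr (n : nat) (k : idx n) (i : 'I_n) : idx n :=
  [ffun j => if j == i then (k j).-1 else k j].

Definition ksum (n : nat) (k : idx n) : nat := (\sum_(j < n) k j)%N.
Definition ksum_lt (n : nat) (k : idx n) (i : 'I_n) : nat :=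
  (\sum_(j < n | (j < i)%N) k j)%N.
(* k_n, the last component (0 if n = 0) *)
Definition klast (n : nat) (k : idx n) : nat :=
  (\sum_(j < n | (j : nat) == n.-1) k j)%N.

Definition ycoef (R : realType) (n : nat) (q : R) (i : 'I_n) (k : idx n) : R :=
  q ^+ ksum_lt k i
  * Num.sqrt (1 - q ^+ ((if (i : nat) == n.-1 then 4 else 2) * k i)%N).

(* pi(y_i)|k> = ycoef(k) |k - e_i>, written on coordinates:
   (pi(y_i) f)(m) = ycoef(m + e_i) f(m + e_i). *)
Definition piY (R : realType) (n : nat) (q : R) (i : 'I_n) : op R n :=
  fun f m => ((ycoef q i (incr m i))%:C)%C * f (incr m i).

(* the adjoint formula: pi(y_i^* )|k> = ycoef(k + e_i) |k + e_i>, i.e.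
   (pi(y_i^* ) f)(m) = ycoef(m) f(m - e_i) if m_i > 0, and 0 otherwise. *)
Definition piYs (R : realType) (n : nat) (q : R) (i : 'I_n) : op R n :=
  fun f m => if (0 < m i)%N then ((ycoef q i m)%:C)%C * f (decr m i) else 0.

(* pi(y_{n+1})|k> = lam q^{|k| + k_n} |k>  (use conj lam for the adjoint) *)
Definition piZ (R : realType) (n : nat) (q : R) (lam : R[i]) : op R n :=
  fun f m => lam * ((q ^+ (ksum m + klast m)%N)%:C)%C * f m.

(* Main.v *)
Require Import Defs.
From HB Require Import structures.
From mathcomp Require Import all_boot all_order all_algebra.
From mathcomp Require Import all_classical all_reals all_analysis.
From mathcomp Require Import complex.
From mathcomp Require Import zify ring lra.
Import Order.TTheory GRing.Theory Num.Theory.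
Import numFieldNormedType.Exports.
Set Implicit Arguments.
Unset Strict Implicit.
Unset Printing Implicit Defensive.
Local Open Scope ring_scope.
Local Open Scope complex_scope.
Section Idx.
Variable n : nat.
Implicit Types (m k : idx n) (i j : 'I_n).

Lemma incrE m i j : incr m i j = if j == i then (m j).+1 else m j.
Proof. by rewrite ffunE. Qed.
Lemma decrE m i j : decr m i j = if j == i then (m j).-1 else m j.
Proof. by rewrite ffunE. Qed.
Lemma incr_same m i : incr m i i = (m i).+1.
Proof. by rewrite incrE eqxx. Qed.
Lemma incr_other m i j : j != i -> incr m i j = m j.
Proof. by rewrite incrE => /negPf ->. Qed.
Lemma decrK m i : decr (incr m i) i = m.
Proof. by apply/ffunP => j; rewrite decrE incrE; case: eqP => // ->. Qed.
Lemma incrK m i : (0 < m i)%N -> incr (decr m i) i = m.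
Proof.
by move=> h; apply/ffunP => j; rewrite incrE decrE; case: eqP => // ->; rewrite prednK.
Qed.
Lemma incr_inj i : injective (fun m => incr m i).
Proof. by move=> a b /(congr1 (fun m => decr m i)); rewrite !decrK. Qed.
Lemma incrC m i j : incr (incr m i) j = incr (incr m j) i.
Proof.
apply/ffunP => l; rewrite !incrE; do 2 case: eqP => //.
Qed.
Lemma incr_pos m i : (0 < incr m i i)%N.
Proof. by rewrite incr_same. Qed.

Lemma sum_incr (P : pred 'I_n) m j :
  (\sum_(l | P l) incr m j l = \sum_(l | P l) m l + P j)%N.
Proof.
rewrite (eq_bigr (fun l => m l + (l == j))%N); last first.
  by move=> l _; rewrite incrE; case: eqP => _ /=; rewrite ?addn1 ?addn0.
rewrite big_split /=; congr (_ + _)%N.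
case Pj: (P j).
  rewrite (bigD1 j) //= eqxx big1 // => l /andP[_ /negPf ->] //.
by rewrite big1 // => l Pl; case: eqP => // e; rewrite e Pj in Pl.
Qed.

Lemma ksum_lt_incr m i j : ksum_lt (incr m j) i = (ksum_lt m i + (j < i))%N.
Proof. by rewrite /ksum_lt (sum_incr (fun l : 'I_n => (l < i)%N)). Qed.
Lemma ksum_incr m j : ksum (incr m j) = (ksum m).+1.
Proof. by rewrite /ksum (sum_incr predT) addn1. Qed.
Lemma klast_incr m j : klast (incr m j) = (klast m + ((j : nat) == n.-1))%N.
Proof. by rewrite /klast (sum_incr (fun l : 'I_n => (l : nat) == n.-1)). Qed.

Definition ee m := (ksum m + klast m)%N.
Lemma ee_incr m j : ee (incr m j) = (ee m + 1 + ((j : nat) == n.-1))%N.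
Proof. by rewrite /ee ksum_incr klast_incr; lia. Qed.

Definition z0 : idx n := [ffun => 0%N].

Lemma ksum0 m : ksum m = 0%N -> m = z0.
Proof.
move=> h; apply/ffunP => j; rewrite ffunE.
have : (m j <= ksum m)%N by rewrite /ksum (bigD1 j) //= leq_addr.
by rewrite h; case: (m j).
Qed.

Lemma ksum_pos m : ksum m <> 0%N -> exists i, (0 < m i)%N.
Proof.
move=> h; apply: contra_notP h => H; rewrite /ksum big1 // => j _.
by apply/eqP; rewrite -leqn0 leqNgt; apply/negP => hj; apply: H; exists j.
Qed.

Lemma ee_z0 : ee z0 = 0%N.
Proof. by rewrite /ee /ksum /klast !big1 // => j _; rewrite ffunE. Qed.

Lemma ee_pos m : m != z0 -> (1 <= ee m)%N.
Proof.
move=> h; rewrite /ee; have : ksum m <> 0%N by move=> /ksum0 e; rewrite e eqxx in h.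
lia.
Qed.

End Idx.
Section Coef.
Variables (R : realType) (n : nat) (q : R).
Hypothesis hq : 0 < q < 1.
Implicit Types (m k : idx n) (i j : 'I_n).

Definition cc i : nat := if (i : nat) == n.-1 then 4%N else 2%N.

Lemma q_ge0 : 0 <= q. Proof. by case/andP: hq => /ltW. Qed.
Lemma q_gt0 : 0 < q. Proof. by case/andP: hq. Qed.
Lemma q_lt1 : q < 1. Proof. by case/andP: hq. Qed.
Lemma q_neq0 : q != 0. Proof. by rewrite gt_eqF // q_gt0. Qed.

Lemma qexp_le1 (a : nat) : q ^+ a <= 1.
Proof. by apply: exprn_ile1; [exact: q_ge0 | exact: ltW q_lt1]. Qed.
Lemma qexp_ge0 (a : nat) : 0 <= q ^+ a.
Proof. by rewrite exprn_ge0 // q_ge0. Qed.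
Lemma qexp_gt0 (a : nat) : 0 < q ^+ a.
Proof. by rewrite exprn_gt0 // q_gt0. Qed.
Lemma qexp_lt1 (a : nat) : (0 < a)%N -> q ^+ a < 1.
Proof. by move=> a0; rewrite exprn_ilt1 ?q_ge0 ?q_lt1 // -lt0n. Qed.

Lemma ycoefE i m : ycoef q i m = q ^+ ksum_lt m i * Num.sqrt (1 - q ^+ (cc i * m i)).
Proof. by []. Qed.

Lemma ycoef_ge0 i m : 0 <= ycoef q i m.
Proof. by rewrite ycoefE mulr_ge0 ?sqrtr_ge0 ?qexp_ge0. Qed.

Lemma ycoef_sq i m : ycoef q i m ^+ 2 = (q ^+ ksum_lt m i) ^+ 2 * (1 - q ^+ (cc i * m i)).
Proof. by rewrite ycoefE exprMn sqr_sqrtr // subr_ge0 qexp_le1. Qed.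

Lemma ycoef_le1 i m : ycoef q i m <= 1.
Proof.
rewrite ycoefE -(mulr1 1) ler_pM ?qexp_ge0 ?sqrtr_ge0 ?qexp_le1 //.
rewrite -[leRHS]sqrtr1 ler_sqrt ?ler01 //; have := qexp_ge0 (cc i * m i); lra.
Qed.

Lemma ycoef_gt0 i m : (0 < m i)%N -> 0 < ycoef q i m.
Proof.
move=> h; rewrite ycoefE mulr_gt0 ?qexp_gt0 // sqrtr_gt0 subr_gt0 qexp_lt1 //.
by rewrite muln_gt0 h /cc; case: eqP.
Qed.

Lemma ycoef_zero i m : m i = 0%N -> ycoef q i m = 0.
Proof. by move=> h; rewrite ycoefE h muln0 expr0 subrr sqrtr0 mulr0. Qed.

Lemma ycoef_incr_other i j m : j != i ->
  ycoef q i (incr m j) = q ^+ (j < i)%N * ycoef q i m.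
Proof.
move=> h; rewrite !ycoefE ksum_lt_incr incr_other 1?eq_sym // exprD; ring.
Qed.

Lemma ycoef_incr_same i m : ycoef q i (incr m i) ^+ 2 =
  (q ^+ ksum_lt m i) ^+ 2 * (1 - q ^+ (cc i * m i) * q ^+ cc i).
Proof.
rewrite ycoef_sq ksum_lt_incr ltnn addn0 incr_same -exprD; congr (_ * (1 - q ^+ _)).
lia.
Qed.

Definition SS m (k : nat) : nat := (\sum_(j < n | (j < k)%N) m j)%N.

Lemma SS_succ m (j : nat) (h : (j < n)%N) : SS m j.+1 = (SS m j + m (Ordinal h))%N.
Proof.
rewrite /SS (bigD1 (Ordinal h)) //= addnC; congr (_ + _)%N.
apply: eq_bigl => l; rewrite ltnS -val_eqE /=; case: ltngtP => //.
Qed.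

Lemma SS_n m : SS m n = ksum m.
Proof. by rewrite /SS /ksum; apply: eq_bigl => l; rewrite ltn_ord. Qed.

Lemma klast_E m (h : (n.-1 < n)%N) : klast m = m (Ordinal h).
Proof. by rewrite /klast (big_pred1 (Ordinal h)) // => l; rewrite -val_eqE. Qed.

Definition tt m (k : nat) : R := if k == n then q ^+ (2 * ee m) else q ^+ (2 * SS m k).

Lemma tele m : forall j : nat, (j <= n)%N ->
  \sum_(k < n | (j <= k)%N) ycoef q k m ^+ 2 + q ^+ (2 * ee m) = tt m j.
Proof.
suff H : forall d (j : nat), (j + d = n)%N ->
    \sum_(k < n | (j <= k)%N) ycoef q k m ^+ 2 + q ^+ (2 * ee m) = tt m j.
  by move=> j hj; apply: (H (n - j)%N); lia.
elim=> [|d IH] j hj.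
  rewrite big1 ?add0r; last by move=> k hk; have := ltn_ord k; lia.
  by rewrite addn0 in hj; rewrite /tt hj eqxx.
have hjn : (j < n)%N by lia.
rewrite (bigD1 (Ordinal hjn)) //=.
rewrite (eq_bigl (fun k : 'I_n => (j.+1 <= k)%N)); last first.
  by move=> l; rewrite -val_eqE /=; case: ltngtP.
rewrite -addrA (IH j.+1); last by lia.
rewrite ycoef_sq /tt (ltn_eqF hjn) /ksum_lt.
rewrite -/(SS m (Ordinal hjn)) /=.
case: eqP => hj1.
  have hn1 : (n.-1 < n)%N by lia.
  have eo : Ordinal hjn = Ordinal hn1 by apply/val_inj => /=; lia.
  have hS : ksum m = (SS m j + m (Ordinal hjn))%N by rewrite -SS_n -(SS_succ m hjn) hj1.
  rewrite /ee hS (klast_E m hn1) -eo /cc /=.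
  have -> : (j == n.-1) = true by apply/eqP; lia.
  set S := SS m j; set a := m (Ordinal hjn).
  have -> : q ^+ (2 * (S + a + a)) = (q ^+ S) ^+ 2 * q ^+ (4 * a).
    by rewrite -exprM -exprD; congr (_ ^+ _); lia.
  have -> : q ^+ (2 * S) = (q ^+ S) ^+ 2 by rewrite -exprM mulnC.
  ring.
rewrite SS_succ /cc /=.
have -> : (j == n.-1) = false by apply/eqP; lia.
set S := SS m j; set a := m (Ordinal hjn).
have -> : q ^+ (2 * (S + a)) = (q ^+ S) ^+ 2 * q ^+ (2 * a).
  by rewrite -exprM -exprD; congr (_ ^+ _); lia.
have -> : q ^+ (2 * S) = (q ^+ S) ^+ 2 by rewrite -exprM mulnC.
ring.
Qed.

End Coef.
Section Ana.
Variables (R : realType) (n : nat).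
Implicit Types (f g : vec R n) (m : idx n).
Local Open Scope classical_set_scope.

Lemma sqmodE (z : R[i]) : (sqmod z)%:C = `|z| ^+ 2.
Proof. exact: add_Re2_Im2. Qed.

Lemma sqmod_ge0 (z : R[i]) : 0 <= sqmod z.
Proof. by rewrite /sqmod addr_ge0 ?sqr_ge0. Qed.

Lemma sqmodM (a b : R[i]) : sqmod (a * b) = sqmod a * sqmod b.
Proof. by case: a => a1 a2; case: b => b1 b2; rewrite /sqmod /=; ring. Qed.

Lemma sqmod_real (x : R) : sqmod (x%:C) = x ^+ 2.
Proof. by rewrite /sqmod /=; ring. Qed.

Lemma sqmod0 : sqmod (0 : R[i]) = 0.
Proof. by rewrite /sqmod /=; ring. Qed.

Lemma sqmod_norm1 (l : R[i]) : `|l| = 1 -> sqmod l = 1.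
Proof. by move=> h; apply: complexI; rewrite sqmodE h expr1n. Qed.

Lemma sqnorm_ge0 f : (0 <= sqnorm f)%E.
Proof. by apply: esum_ge0 => m _; rewrite lee_fin sqmod_ge0. Qed.

Lemma wshift_le (w : idx n -> R[i]) (s : idx n -> idx n) f :
  (forall m, sqmod (w m) <= 1) ->
  (forall m1 m2, w m1 != 0 -> w m2 != 0 -> s m1 = s m2 -> m1 = m2) ->
  (sqnorm (fun m => (w m * f (s m))%R) <= sqnorm f)%E.
Proof.
move=> hw hs; rewrite /sqnorm.
pose A := [set m : idx n | ((w m) != (0 : R[i]))%B].
apply: (@le_trans _ _ (\esum_(m in [set: idx n])
   (if m \in A then (sqmod (f (s m)))%:E else 0%E))).
  apply: le_esum => m _; rewrite sqmodM; case: ifPn => hm.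
    by rewrite lee_fin ler_piMl ?sqmod_ge0.
  have -> : w m = 0 by apply/eqP; apply: contraNT hm => h; apply/mem_set.
  by rewrite sqmod0 mul0r.
rewrite -esum_mkcond -(esum_image A s (fun m => (sqmod (f m))%:E)); last first.
  by move=> x y /set_mem hx /set_mem hy; apply: hs.
rewrite (esum_mkcond (s @` A)); apply: le_esum => m _.
by case: ifPn => // _; rewrite lee_fin sqmod_ge0.
Qed.

Lemma bounded_of (T : op R n) : (forall f, (sqnorm (T f) <= sqnorm f)%E) -> bounded_op T.
Proof.
move=> H; exists 1 => f hf; split.
  by rewrite /in_l2; exact: le_lt_trans (H f) hf.
rewrite mul1r; apply: fine_le; last exact: H.
- by rewrite ge0_fin_numE ?sqnorm_ge0 //; exact: le_lt_trans (H f) hf.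
- by rewrite ge0_fin_numE ?sqnorm_ge0.
Qed.

Lemma esum_reindex0 (T : choiceType) (s : T -> T) (a b : T -> \bar R) :
  injective s -> (forall x, a (s x) = b x) ->
  (forall y, (forall x, s x <> y) -> a y = 0%E) ->
  \esum_(k in [set: T]) a k = \esum_(k in [set: T]) b k.
Proof.
move=> inj hab h0.
have -> : \esum_(k in [set: T]) a k = \esum_(k in s @` [set: T]) a k.
  rewrite [RHS]esum_mkcond; apply: eq_esum => z _; case: ifPn => // hm.
  apply: h0 => x e; move/negP: hm; apply; apply/mem_set; by exists x.
rewrite esum_image; first by apply: eq_esum => x _; exact: hab.
by move=> x y _ _; exact: inj.
Qed.

Lemma rsum_reindex (T : choiceType) (s : T -> T) (F G : T -> R) :
  injective s -> (forall x, G (s x) = F x) ->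
  (forall y, (forall x, s x <> y) -> G y = 0) ->
  rsum G = rsum F.
Proof.
move=> inj hGF h0; rewrite /rsum; congr (fine _ - fine _); apply: (esum_reindex0 inj).
- by move=> x; rewrite hGF.
- by move=> y h; rewrite h0 // maxxx.
- by move=> x; rewrite hGF.
- by move=> y h; rewrite h0 // oppr0 maxxx.
Qed.


Lemma sqmodN (z : R[i]) : sqmod (- z) = sqmod z.
Proof. by case: z => a b; rewrite /sqmod /=; ring. Qed.

Lemma esum_scale_le (T : choiceType) (c : R) (b : T -> \bar R) :
  0 <= c -> (forall x, (0 <= b x)%E) ->
  (\esum_(x in [set: T]) (c%:E * b x) <= c%:E * \esum_(x in [set: T]) b x)%E.
Proof.
move=> c0 b0; apply: ge_ereal_sup => _ [X [finX _] <-] /=.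
rewrite -ge0_mule_fsumr //; apply: lee_wpmul2l; first by rewrite lee_fin.
by apply: ereal_sup_ubound; exists X.
Qed.

End Ana.
Section Ops.
Variables (R : realType) (n : nat) (q : R) (lam : R[i]).
Hypothesis hq : 0 < q < 1.
Hypothesis hlam : `|lam| = 1.
Hypothesis hn : (1 <= n)%N.
Implicit Types (m k : idx n) (i j : 'I_n) (f g : vec R n).

Local Notation Y := (piY (n:=n) q).
Local Notation Ys := (piYs (n:=n) q).
Local Notation Z := (piZ (n:=n) q lam).
Local Notation Zs := (piZ (n:=n) q (conjc lam)).
Local Notation c := ((q%:C)%C : R[i]).

Lemma lamJ : (conjc lam * lam = 1)%R.
Proof. by rewrite mulrC -sqr_normc hlam expr1n. Qed.

Lemma cq_neq0 : c != 0.
Proof. by apply/eqP => /(congr1 (@complex.Re R)) /= h; move: (q_neq0 hq); rewrite h eqxx. Qed.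


Lemma piZE l f m : piZ q l f m = l * (q ^+ ee m)%:C * f m.
Proof. by []. Qed.

Lemma YsY i f m : Ys i (Y i f) m = ((ycoef q i m) ^+ 2)%:C * f m.
Proof.
rewrite /piYs /piY; case: (posnP (m i)) => [m0|mpos].
  by rewrite /= (ycoef_zero q m0) expr0n /= mul0r.
by rewrite /= incrK // rmorphXn /= mulrA expr2.
Qed.

Lemma YYs i f m : Y i (Ys i f) m = ((ycoef q i (incr m i)) ^+ 2)%:C * f m.
Proof. by rewrite /piYs /piY incr_pos decrK rmorphXn /= mulrA expr2. Qed.

Lemma ZsZ f m : Zs (Z f) m = (q ^+ (2 * ee m))%:C * f m.
Proof.
rewrite !piZE mulnC exprM expr2 rmorphM /=.
have := lamJ; move=> h.
rewrite -[RHS]mul1r -h; ring.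
Qed.

Lemma ZZs f m : Z (Zs f) m = (q ^+ (2 * ee m))%:C * f m.
Proof. by rewrite -ZsZ !piZE; ring. Qed.

Lemma Y0 i m : Y i (fun _ => 0) m = 0. Proof. by rewrite /piY mulr0. Qed.
Lemma Ys0 i m : Ys i (fun _ => 0) m = 0.
Proof. by rewrite /piYs mulr0; case: ifP. Qed.
Lemma Z0 l m : piZ q l (fun _ => 0) m = 0. Proof. by rewrite /piZ mulr0. Qed.

Lemma ycoef_swap i j m : i != j ->
  ycoef q i (incr (incr m j) i) = q ^+ (j < i)%N * ycoef q i (incr m i).
Proof. by move=> h; rewrite incrC ycoef_incr_other // eq_sym. Qed.

Lemma incr_decr_ex m i : (0 < m i)%N -> exists m', m = incr m' i.
Proof. by move=> h; exists (decr m i); rewrite incrK. Qed.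

Lemma ord_last_lt : (n.-1 < n)%N. Proof. by case: n hn. Qed.

Lemma sumXX f m :
  \sum_(k < n) Xsig Zs k (Xsig Z k f) m = (q ^+ (2 * ee m))%:C * f m.
Proof.
rewrite (bigD1 (Ordinal ord_last_lt)) //= /Xsig /= eqxx ZsZ big1 ?addr0 //.
move=> k hk; have -> : ((k : nat) == n.-1) = false.
  by apply/negbTE; apply: contra hk => /eqP e; apply/eqP/val_inj.
by [].
Qed.


Lemma not_last_lt i j : (j < i)%N -> ((j : nat) == n.-1) = false.
Proof. by move=> h; apply/eqP => e; have := ltn_ord i; lia. Qed.

Lemma rel1 i j f m : (i < j)%N ->
  Xsig Z i (Xsig Z j f) m = c^-1 * Xsig Z j (Xsig Z i f) m.
Proof.
move=> h; rewrite {1 4}/Xsig (not_last_lt h) /=.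
by rewrite /Xsig; case: ifP => _; rewrite ?Z0 mulr0.
Qed.

Lemma rel2 i j f m : (j < i)%N ->
  Y i (Y j f) m = c^-1 * Y j (Y i f) m.
Proof.
move=> h; have hij : i != j by rewrite neq_ltn h orbT.
rewrite /piY (incrC m i j) (ycoef_swap m hij).
have hji : j != i by rewrite eq_sym.
rewrite -(incrC m i j) (ycoef_swap m hji) h.
have -> : (i < j)%N = false by lia.
rewrite !(rmorphM, rmorphXn, rmorph1) /= expr0 expr1.
by field; exact: cq_neq0.
Qed.


Ltac simpC := rewrite ?(rmorph0, rmorphM, rmorphXn, rmorph1, rmorphD, rmorphB, rmorphN) /=.

Lemma rel3 i j f m : i != j ->
  Xsig Z i (Y j f) m = c^-1 * Y j (Xsig Z i f) m.
Proof.
move=> hij; rewrite /Xsig; case hi: ((i : nat) == n.-1); last by rewrite Y0 mulr0.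
have hj : ((j : nat) == n.-1) = false.
  apply/negbTE; apply: contra hij => /eqP hj; apply/eqP/val_inj; rewrite /= hj; exact/eqP.
rewrite /piY !piZE ee_incr hj addn0 exprD expr1; simpC.
by field; exact: cq_neq0.
Qed.


Lemma rel4 i f m :
  Y i (Xsig Z i f) m = c ^+ 2 * Xsig Z i (Y i f) m
    + (c ^+ 2 - 1) * \sum_(k < n | (k < i)%N) c ^+ (i - k) * Xsig Z k (Y k f) m.
Proof.
rewrite big1 ?mulr0 ?addr0; last first.
  by move=> k hk; rewrite /Xsig (not_last_lt hk) /= mulr0.
rewrite /Xsig; case hi: ((i : nat) == n.-1); last by rewrite Y0 mulr0.
rewrite /piY !piZE ee_incr hi -addnA exprD; simpC; ring.
Qed.

Lemma rel5 i f m :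
  Xsig Z i (Xsig Zs i f) m = Xsig Zs i (Xsig Z i f) m
    + (1 - c ^+ 2) * \sum_(k < n | (k < i)%N) Xsig Zs k (Xsig Z k f) m.
Proof.
rewrite big1 ?mulr0 ?addr0; last first.
  by move=> k hk; rewrite /Xsig (not_last_lt hk).
rewrite /Xsig; case hi: ((i : nat) == n.-1) => //.
by rewrite ZZs ZsZ.
Qed.

Lemma rel6 i f m :
  Y i (Ys i f) m = Ys i (Y i f) m
    + (1 - c ^+ 2) * (c ^+ (2 * (n - i)) * Xsig Zs i (Xsig Z i f) m
                      + \sum_(k < n) Xsig Zs k (Xsig Z k f) m
                      + \sum_(k < n | (i < k)%N) Ys k (Y k f) m).
Proof.
rewrite YYs YsY sumXX (eq_bigr (fun k : 'I_n => ((ycoef q k m) ^+ 2)%:C * f m)); last first.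
  by move=> k _; rewrite YsY.
rewrite -big_distrl /= -rmorph_sum.
have T := tele hq m (ltn_ord i).
rewrite (ycoef_incr_same hq) (ycoef_sq hq).
have hS : tt q m i.+1 = if (i.+1 == n) then q ^+ (2 * ee m) else q ^+ (2 * (ksum_lt m i + m i)).
  have eoi : Ordinal (ltn_ord i) = i by apply/val_inj.
  by rewrite /tt; case: eqP => // _; rewrite /ksum_lt -/(SS m i) (SS_succ m (ltn_ord i)) eoi.
rewrite -T in hS.
rewrite /Xsig; case hi: ((i : nat) == n.-1).
  have hin : i.+1 == n by apply/eqP; move/eqP: hi; have := ltn_ord i; lia.
  rewrite hin in hS; rewrite ZsZ.
  have -> : (2 * (n - i))%N = 2%N by move/eqP: hi; have := ltn_ord i; lia.
  have eS : ee m = (ksum_lt m i + 2 * m i)%N.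
    have hn1 := ord_last_lt.
    have eo : Ordinal hn1 = i by apply/val_inj; rewrite /= (eqP hi).
    have eoi : Ordinal (ltn_ord i) = i by apply/val_inj.
    have e1 : SS m n = SS m i.+1 by rewrite (eqP hin).
    rewrite /ee -SS_n (klast_E m hn1) e1 (SS_succ m (ltn_ord i)) eo eoi /ksum_lt -/(SS m i); lia.
  have hc : cc i = 4%N by rewrite /cc hi.
  have hsum : \sum_(k < n | (i < k)%N) ycoef q k m ^+ 2 = 0.
    by apply: (addIr (q ^+ (2 * ee m))); rewrite add0r.
  rewrite hsum hc eS.
  set S := ksum_lt m i; set a := m i.
  have -> : q ^+ (2 * (S + 2 * a)) = (q ^+ S) ^+ 2 * q ^+ (4 * a).
    by rewrite -exprM -exprD; congr (_ ^+ _); lia.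
  rewrite rmorph0; simpC; ring.
have hin : (i.+1 == n) = false by apply/eqP; move/eqP: hi; lia.
rewrite hin in hS.
have hc : cc i = 2%N by rewrite /cc hi.
have hsum : \sum_(k < n | (i < k)%N) ycoef q k m ^+ 2
    = q ^+ (2 * (ksum_lt m i + m i)) - q ^+ (2 * ee m) by rewrite -hS addrK.
rewrite /= hsum hc.
set S := ksum_lt m i; set a := m i.
have -> : q ^+ (2 * (S + a)) = (q ^+ S) ^+ 2 * q ^+ (2 * a).
  by rewrite -exprM -exprD; congr (_ ^+ _); lia.
simpC; ring.
Qed.


Lemma rel7 i f m : Xsig Z i (Ys i f) m = c ^+ 2 * Ys i (Xsig Z i f) m.
Proof.
rewrite /Xsig; case hi: ((i : nat) == n.-1); last by rewrite Ys0 mulr0.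
rewrite /piYs !piZE; case: (posnP (m i)) => [m0|mpos] /=.
  by rewrite !mulr0.
have [m' ->] := incr_decr_ex mpos.
rewrite decrK ee_incr hi -addnA exprD; simpC; ring.
Qed.

Lemma rel8 i j f m : i != j ->
  Xsig Z i (Xsig Zs j f) m = c * Xsig Zs j (Xsig Z i f) m.
Proof.
move=> hij; rewrite /Xsig.
case hi: ((i : nat) == n.-1); case hj: ((j : nat) == n.-1) => /=.
- have e : i = j by apply/val_inj; rewrite /= (eqP hi) (eqP hj).
  by rewrite e eqxx in hij.
- by rewrite Z0 mulr0.
- by rewrite Z0 mulr0.
- by rewrite mulr0.
Qed.

Lemma XsX0 i j f m : i != j -> Xsig Zs i (Xsig Z j f) m = 0.
Proof.
move=> hij; rewrite /Xsig.
case hi: ((i : nat) == n.-1); case hj: ((j : nat) == n.-1) => //=.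
- have e : i = j by apply/val_inj; rewrite /= (eqP hi) (eqP hj).
  by rewrite e eqxx in hij.
- by rewrite Z0.
Qed.

Lemma rel9 i j f m : i != j ->
  Y i (Ys j f) m = c * Ys j (Y i f) m
     - (c ^+ 2 - 1) * c ^+ (2 * n - i - j) * Xsig Zs i (Xsig Z j f) m.
Proof.
move=> hij; rewrite XsX0 // mulr0 subr0.
have hji : j != i by rewrite eq_sym.
rewrite /piY /piYs incr_other //.
case: (posnP (m j)) => [m0|mpos] /=; first by rewrite !mulr0.
have [m' ->] := incr_decr_ex mpos.
rewrite decrK (incrC m' j i) decrK (ycoef_incr_other q (incr m' i) hji).
rewrite (incrC m' i j) (ycoef_incr_other q (incr m' j) hij).
case: (ltngtP i j) => hl.
- rewrite /= ?expr0 ?expr1; simpC; ring.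
- rewrite /= ?expr0 ?expr1; simpC; ring.
- by move: hij; rewrite (val_inj hl) eqxx.
Qed.

Lemma rel10 i j f m : (i < j)%N ->
  Xsig Z i (Ys j f) m = c * Ys j (Xsig Z i f) m.
Proof. by move=> h; rewrite /Xsig (not_last_lt h) /= Ys0 mulr0. Qed.

Lemma rel11 i j f m : (j < i)%N ->
  Xsig Z i (Ys j f) m = c * Ys j (Xsig Z i f) m
     + (c ^+ 2 - 1) * c ^+ (i - j) * Ys i (Xsig Z j f) m.
Proof.
move=> h; rewrite {3}/Xsig (not_last_lt h) /= Ys0 mulr0 addr0.
rewrite /Xsig; case hi: ((i : nat) == n.-1); last by rewrite Ys0 mulr0.
rewrite /piYs !piZE; case: (posnP (m j)) => [m0|mpos] /=; first by rewrite !mulr0.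
have [m' ->] := incr_decr_ex mpos.
rewrite decrK ee_incr (not_last_lt h) addn0 exprD; simpC; ring.
Qed.

Lemma rel12 f m :
  \sum_(i < n) (Xsig Zs i (Xsig Z i f) m + Ys i (Y i f) m) = f m.
Proof.
rewrite big_split /= sumXX (eq_bigr (fun k : 'I_n => ((ycoef q k m) ^+ 2)%:C * f m)); last first.
  by move=> k _; rewrite YsY.
rewrite -big_distrl /= -rmorph_sum -mulrDl -rmorphD.
have T := tele hq m (leq0n n).
rewrite (eq_bigl (fun k : 'I_n => (0 <= k)%N)) // addrC T /tt.
have -> : (0 == n) = false by apply/eqP; lia.
rewrite /SS big1 ?muln0 ?expr0 ?mul1r //.
Qed.


Lemma rels : sphere_rels q (Xsig Z) (Xsig Zs) Y Ys.
Proof.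
rewrite /sphere_rels; repeat match goal with |- _ /\ _ => split end.
- by move=> i j h f _; apply: funext => m /=; exact: rel1.
- by move=> i j h f _; apply: funext => m /=; exact: rel2.
- by move=> i j h f _; apply: funext => m /=; exact: rel3.
- by move=> i f _; apply: funext => m /=; exact: rel4.
- by move=> i f _; apply: funext => m /=; exact: rel5.
- by move=> i f _; apply: funext => m /=; exact: rel6.
- by move=> i f _; apply: funext => m /=; exact: rel7.
- by move=> i j h f _; apply: funext => m /=; exact: rel8.
- by move=> i j h f _; apply: funext => m /=; exact: rel9.
- by move=> i j h f _; apply: funext => m /=; exact: rel10.
- by move=> i j h f _; apply: funext => m /=; exact: rel11.
- by move=> f _; apply: funext => m /=; exact: rel12.
Qed.


Lemma ycoef_sqmod_le1 i m : sqmod ((ycoef q i m)%:C) <= 1.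
Proof.
rewrite sqmod_real expr2 -(mulr1 1) ler_pM ?ycoef_ge0 ?(ycoef_le1 hq) //.
Qed.

Lemma conjRM (x : R) (z : R[i]) : conjc (x%:C * z) = x%:C * conjc z.
Proof. by case: z => a b; rewrite /=; congr (_ +i* _)%C; ring. Qed.

Lemma conjM (a b : R[i]) : conjc (a * b) = conjc a * conjc b.
Proof. by case: a => a1 a2; case: b => b1 b2; rewrite /=; congr (_ +i* _)%C; ring. Qed.

Lemma conjR (x : R) : conjc (x%:C) = x%:C.
Proof. by rewrite /= oppr0. Qed.

Lemma boundY i : bounded_op (Y i).
Proof.
apply: bounded_of => f.
apply: (wshift_le (w := fun m => (ycoef q i (incr m i))%:C) (s := fun m => incr m i)).
  by move=> m; exact: ycoef_sqmod_le1.
by move=> m1 m2 _ _; exact: incr_inj.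
Qed.

Lemma boundYs i : bounded_op (Ys i).
Proof.
apply: bounded_of => f.
pose w m := if (0 < m i)%N then (ycoef q i m)%:C else 0.
have -> : Ys i f = (fun m => (w m * f (decr m i))%R).
  by apply: funext => m; rewrite /piYs /w; case: ifP => //; rewrite mul0r.
apply: wshift_le.
  by move=> m; rewrite /w; case: ifP => _; rewrite ?ycoef_sqmod_le1 // sqmod0 ler01.
move=> m1 m2; rewrite /w; case: ifP => h1; last by rewrite eqxx.
case: ifP => h2; last by rewrite eqxx.
by move=> _ _ e; rewrite -(incrK h1) -(incrK h2) e.
Qed.

Lemma boundZ l : `|l| = 1 -> bounded_op (piZ (n:=n) q l).
Proof.
move=> hl; apply: bounded_of => f.
apply: (wshift_le (w := fun m => l * (q ^+ ee m)%:C) (s := id)); last by [].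
move=> m; rewrite sqmodM sqmod_norm1 // mul1r sqmod_real -exprM.
exact: qexp_le1.
Qed.

Lemma adjY i : adjoint_of (Y i) (Ys i).
Proof.
move=> f g _ _; rewrite /cdot; congr (_ +i* _)%C; symmetry;
  apply: (rsum_reindex (s := fun m => incr m i)) => //; try exact: incr_inj.
- by move=> m; rewrite /piYs /piY incr_pos decrK conjRM mulrCA mulrA.
- move=> m' h; rewrite /piYs; case: ifP => hp; last by rewrite mulr0.
  by exfalso; apply: (h (decr m' i)); rewrite incrK.
- by move=> m; rewrite /piYs /piY incr_pos decrK conjRM mulrCA mulrA.
- move=> m' h; rewrite /piYs; case: ifP => hp; last by rewrite mulr0.
  by exfalso; apply: (h (decr m' i)); rewrite incrK.
Qed.

Lemma adjZ : adjoint_of Z Zs.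
Proof.
move=> f g _ _.
have e : forall m, conjc (Z f m) * g m = conjc (f m) * Zs g m.
  by move=> m; rewrite !piZE !conjM conjR; ring.
rewrite /cdot; congr (_ +i* _)%C; congr rsum; apply: funext => m; by rewrite e.
Qed.

Lemma star_rep : star_rep_Sigma q Y Ys Z Zs.
Proof.
split; first by move=> i; split; [exact: boundY | split; [exact: boundYs | exact: adjY]].
split; first exact: boundZ.
split; first by apply: boundZ; rewrite normcJ.
split; first exact: adjZ.
exact: rels.
Qed.


Definition delta (k : idx n) : vec R n := fun m => if m == k then 1 else 0.

Lemma realC_neq0 (x : R) : x != 0 -> x%:C != 0.
Proof. by move=> h; apply/eqP => /(congr1 (@complex.Re R)) /= e; rewrite e eqxx in h. Qed.

Lemma ycoef_incr_neq0 i m : (ycoef q i (incr m i))%:C != 0.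
Proof. by apply: realC_neq0; rewrite gt_eqF // (ycoef_gt0 hq) // incr_pos. Qed.

Lemma Ys_delta i k : Ys i (delta k) = fun m => (ycoef q i (incr k i))%:C * delta (incr k i) m.
Proof.
apply: funext => m; rewrite /piYs /delta; case: (posnP (m i)) => [m0|mp] /=.
  case: eqP => [e|_]; last by rewrite mulr0.
  by move: m0; rewrite e incr_same.
have [m' ->] := incr_decr_ex mp.
rewrite decrK (inj_eq (@incr_inj _ i)); case: eqP => [->|_]; by rewrite ?mulr0 ?mulr1.
Qed.

Section Sub.
Variable V : set (vec R n).
Hypothesis hV : closed_subspace V.
Local Open Scope classical_set_scope.

Lemma V_scale (a : R[i]) f : V f -> V (fun m => a * f m).
Proof. by case: hV => _ [_ [_ [hs _]]]; apply: hs. Qed.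

Lemma V_add f g : V f -> V g -> V (fun m => f m + g m).
Proof. by case: hV => _ [_ [ha _]]; apply: ha. Qed.

Lemma V_zero : V (fun _ => 0).
Proof. by case: hV => _ [h _]. Qed.

Lemma V_l2 f : V f -> in_l2 f.
Proof. by case: hV => h _; apply: h. Qed.



Lemma delta_all : (forall i, Defs.invariant V (Ys i)) -> V (delta (z0 n)) -> forall k, V (delta k).
Proof.
move=> hinv h0.
suff H : forall N k, ksum k = N -> V (delta k) by move=> k; exact: (H _ k erefl).
elim=> [|N IH] k hk; first by rewrite (ksum0 hk).
have [i hi] : exists i, (0 < k i)%N by apply: ksum_pos; rewrite hk.
have [k' ek] := incr_decr_ex hi.
have hk' : ksum k' = N by move: hk; rewrite ek ksum_incr => -[].
have := hinv i _ (IH k' hk'); rewrite Ys_delta => /(V_scale (ycoef q i (incr k' i))%:C^-1).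
rewrite ek; congr V; apply: funext => m; rewrite mulrA mulVf ?mul1r //.
exact: ycoef_incr_neq0.
Qed.

Lemma find0 : (forall i, Defs.invariant V (Y i)) ->
  forall k f, V f -> f k != 0 -> exists g, V g /\ g (z0 n) != 0.
Proof.
move=> hinv.
suff H : forall N k f, ksum k = N -> V f -> f k != 0 -> exists g, V g /\ g (z0 n) != 0.
  by move=> k f; exact: (H _ k f erefl).
elim=> [|N IH] k f hk Vf fk; first by exists f; rewrite -(ksum0 hk).
have [i hi] : exists i, (0 < k i)%N by apply: ksum_pos; rewrite hk.
have [k' ek] := incr_decr_ex hi.
have hk' : ksum k' = N by move: hk; rewrite ek ksum_incr => -[].
apply: (IH k' (Y i f) hk' (hinv i _ Vf)).
by rewrite /piY mulf_neq0 ?ycoef_incr_neq0 // -ek.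
Qed.



Lemma memB (T : Type) (P : T -> bool) x : (x \in [set y | P y]) = P x.
Proof. by apply/idP/idP => [/set_mem|/mem_set]. Qed.

Lemma delta_l2 k : in_l2 (delta k).
Proof.
rewrite /in_l2 /sqnorm.
have -> : (fun m => (sqmod (delta k m))%:E) = (fun m => if m \in [set k] then 1%E else 0%E).
  apply: funext => m; rewrite in_set1 /delta; case: eqP => _.
    by rewrite sqmod_real expr1n.
  by rewrite sqmod0.
by rewrite -esum_mkcond esum_set1 ?ltry.
Qed.

Lemma delta0_in : Defs.invariant V Z -> Defs.invariant V Zs ->
  forall g, V g -> g (z0 n) != 0 -> V (delta (z0 n)).
Proof.
move=> hZ hZs g Vg g0.
pose g' := fun m => (g (z0 n))^-1 * g m.
have Vg' : V g' := V_scale _ Vg.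
have l2g' := V_l2 Vg'.
pose u N := iter N (fun h => Zs (Z h)) g'.
have Vu : forall N, V (u N) by elim=> [|N IH] //=; apply: hZs; apply: hZ.
have uE : forall N m, u N m = (((q ^+ (2 * ee m)) ^+ N)%:C) * g' m.
  elim=> [|N IH] m /=; first by rewrite expr0 rmorph1 mul1r.
  by rewrite ZsZ IH exprS rmorphM mulrA.
case: hV => _ [_ [_ [_ Vlim]]].
apply: (Vlim u) => //; first exact: delta_l2.
have fS : sqnorm g' \is a fin_num by rewrite ge0_fin_numE ?sqnorm_ge0.
set K := fine (sqnorm g').
have q2 : 0 <= q ^+ 2 <= 1 by rewrite (qexp_ge0 hq) ?(qexp_le1 hq).
have hb : forall N, 0 <= fine (sqnorm (fun m => u N m - delta (z0 n) m)) <= (q ^+ 2) ^+ N * K.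
  move=> N; rewrite fine_ge0 ?sqnorm_ge0 //=.
  have le1 : (sqnorm (fun m => (u N m - delta (z0 n) m)%R)
      <= \esum_(m in [set: idx n]) (((q ^+ 2) ^+ N)%:E * (sqmod (g' m))%:E))%E.
    apply: le_esum => m _; rewrite /delta uE; case: eqP => [->|ne].
      rewrite ee_z0 muln0 expr0 expr1n rmorph1 mul1r /g' mulVf // subrr sqmod0 -EFinM lee_fin.
      by apply: mulr_ge0; [apply: exprn_ge0; exact: qexp_ge0 | exact: sqmod_ge0].
    rewrite subr0 sqmodM sqmod_real -EFinM lee_fin ler_wpM2r ?sqmod_ge0 //.
    have e1 : (1 <= ee m)%N by apply: ee_pos; apply/eqP.
    set a := (q ^+ (2 * ee m)) ^+ N; set b := (q ^+ 2) ^+ N.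
    have a0 : 0 <= a by rewrite exprn_ge0 ?(qexp_ge0 hq).
    have ab : a <= b.
      rewrite /a /b lerXn2r ?nnegrE ?(qexp_ge0 hq) //.
      by rewrite ler_wiXn2l ?(q_ge0 hq) ?(ltW (q_lt1 hq)) //; lia.
    have b1 : b <= 1 by rewrite /b exprn_ile1 ?(qexp_ge0 hq) ?(qexp_le1 hq).
    nra.
  have le2 : (sqnorm (fun m => (u N m - delta (z0 n) m)%R) <= ((q ^+ 2) ^+ N)%:E * sqnorm g')%E.
    apply: le_trans le1 _; apply: esum_scale_le; first by rewrite exprn_ge0 ?(qexp_ge0 hq).
    by move=> m; rewrite lee_fin sqmod_ge0.
  have fL : sqnorm (fun m => (u N m - delta (z0 n) m)%R) \is a fin_num.
    rewrite ge0_fin_numE ?sqnorm_ge0 //; apply: le_lt_trans le2 _.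
    by rewrite -(fineK fS) -EFinM ltry.
  have := fine_le fL _ le2; rewrite -(fineK fS) -EFinM /=; apply => //.
apply: (@squeeze_cvgr _ _ _ _ (fun _ => 0) (fun N => (q ^+ 2) ^+ N * K)).
- by apply: nearW => N; exact: hb.
- exact: cvg_cst.
- rewrite -(mul0r K); apply: cvgMl; apply: cvg_expr.
  by rewrite ger0_norm ?(qexp_ge0 hq) // exprn_ilt1 ?(q_ge0 hq) ?(q_lt1 hq).
Qed.



Lemma trunc_in : (forall k, V (delta k)) -> forall f, in_l2 f -> V f.
Proof.
move=> hd f hf.
pose tr (j : nat) := fun m : idx n => if (pickle m < j)%N then f m else 0.
have Vtr : forall j : nat, V (tr j).
  elim=> [|j IH].
    have -> : tr 0%N = fun _ => 0 by apply: funext => m.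
    exact: V_zero.
  pose d := fun m : idx n => if pickle m == j then f m else 0.
  have Vd : V d.
    case E: (@pickle_inv (idx n) j) => [k|].
      have pk : pickle k = j by have := @pickle_invK (idx n) j; rewrite E.
      have -> : d = fun m => f k * delta k m.
        apply: funext => m; rewrite /d /delta; case: (m =P k) => [->|ne]; first by rewrite pk eqxx mulr1.
        case: eqP => [pm|_]; last by rewrite mulr0.
        by exfalso; apply: ne; apply: (pcan_inj (@pickleK_inv (idx n))); rewrite pm pk.
      exact: V_scale.
    have -> : d = fun _ => 0.
      apply: funext => m; rewrite /d; case: eqP => // pm.
      by move: E; rewrite -pm pickleK_inv.
    exact: V_zero.
  have -> : tr j.+1 = fun m => tr j m + d m.
    apply: funext => m; rewrite /tr /d ltnS leq_eqVlt; case: eqP => [->|_] /=.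
      by rewrite ltnn add0r.
    by rewrite addr0.
  exact: V_add.
case: hV => _ [_ [_ [_ Vlim]]]; apply: (Vlim tr) => //.
pose a := fun m => (sqmod (f m))%:E.
have a0 : forall m, (0 <= a m)%E by move=> m; rewrite lee_fin sqmod_ge0.
pose B (j : nat) := [set m : idx n | (pickle m < j)%N].
have eq : forall j : nat, sqnorm (fun m => tr j m - f m) = \esum_(m in ~` B j) a m.
  move=> j; rewrite /sqnorm [RHS]esum_mkcond; apply: eq_esum => m _.
  rewrite in_setC memB /tr; case: ifP => _ /=.
    by rewrite subrr sqmod0.
  by rewrite sub0r sqmodN.
have fS : sqnorm f \is a fin_num by rewrite ge0_fin_numE ?sqnorm_ge0.
have tail : forall e : R, 0 < e -> exists N, forall j : nat, (N <= j)%N ->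
    (\esum_(m in ~` B j) a m <= e%:E)%E.
  move=> e e0.
  have H : ((fine (sqnorm f) - e)%:E < sqnorm f)%E.
    by rewrite -[X in (_ < X)%E](fineK fS) lte_fin; lra.
  have H' : ((fine (sqnorm f) - e)%:E <
      ereal_sup [set (\sum_(x \in A) a x)%R | A in fsets [set: idx n]])%E by exact: H.
  have [y [X [finX _] <-] hy] := ereal_sup_gt H'.
  exists (\max_(x <- finmap.enum_fset (fset_set X)) pickle x)%N.+1 => j hj.
  have sub : X `<=` B j.
    move=> x Xx; rewrite /B /=; apply: leq_trans hj; rewrite ltnS.
    by apply: (leq_bigmax_seq x) => //; rewrite in_fset_set // mem_set.
  have spl := esumID (B j) [set: idx n] a (fun m _ => a0 m).
  rewrite !setTI in spl.
  have ge : (\sum_(x \in X) a x <= \esum_(m in B j) a m)%E.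
    by apply: esum_ge; exists X.
  have P0 : (0 <= \esum_(m in B j) a m)%E by apply: esum_ge0.
  have Q0 : (0 <= \esum_(m in ~` B j) a m)%E by apply: esum_ge0.
  have : (\esum_(m in B j) a m + \esum_(m in ~` B j) a m)%E \is a fin_num.
    by rewrite -spl.
  rewrite fin_numD => /andP [fP fQ].
  move: spl ge hy; rewrite -(fineK fP) -(fineK fQ) -[sqnorm f](fineK fS).
  move=> /(congr1 fine) /= spl ge hy.
  have hy' := lt_le_trans hy ge.
  have spl' : fine (sqnorm f) = fine (\esum_(m in B j) a m) + fine (\esum_(m in ~` B j) a m) := spl.
  rewrite lte_fin in hy'; rewrite -(fineK fQ) lee_fin; lra.
apply/cvgrPdist_le => e e0.
have [N hN] := tail e e0.
exists N => // j /= hj.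
have Q0 : (0 <= \esum_(m in ~` B j) a m)%E by apply: esum_ge0 => m _; exact: a0.
have fQ : (\esum_(m in ~` B j) a m) \is a fin_num.
  by rewrite ge0_fin_numE // (le_lt_trans (hN j hj)) ?ltry.
rewrite eq sub0r normrN ger0_norm ?fine_ge0 //.
by rewrite -lee_fin fineK // hN.
Qed.



End Sub.

Lemma irred : irreducible_Sigma Y Ys Z Zs.
Proof.
move=> V hV hinv hZ hZs.
have [[f [Vf nf]] | H] := pselect (exists f, V f /\ f <> (fun _ => 0)); last first.
  left => f Vf; apply: contra_notP H => nf; by exists f.
right.
have [k fk] : exists k, f k != 0.
  apply: contra_notP nf => H; apply: funext => m.
  apply/eqP/negPn/negP => hm; apply: H; by exists m.
have [g [Vg g0]] := find0 (fun i => (hinv i).1) Vf fk.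
have Vd0 := delta0_in hV hZ hZs Vg g0.
have Vd := delta_all hV (fun i => (hinv i).2) Vd0.
move=> h hl2; exact: trunc_in hV Vd h hl2.
Qed.

End Ops.

Unset Implicit Arguments.
Local Close Scope complex_scope.

Theorem proposition1p2 (R : realType) (n : nat) (q : R) (lam : R[i]) :
  (1 <= n)%N -> 0 < q < 1 -> `|lam| = 1 ->
  star_rep_Sigma q (piY (n:=n) q) (piYs q) (piZ q lam) (piZ q (conjc lam)) /\
  irreducible_Sigma (piY (n:=n) q) (piYs q) (piZ q lam) (piZ q (conjc lam)).
Proof.
move=> hn hq hlam; split.
- by apply: star_rep.
- by apply: irred.
Qed.
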